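(* Let $q=3^{2n+1}$ and $q=q_0^r$ with $r\neq3$ an odd prime. Then for any subfield $\mathbb{F}_{q_1}$ of $\mathbb{F}_q$ there exists $\lambda\in\mathbb{F}_{q_0}$ such that $\mathrm{Tr}_{\mathbb{F}_q/\mathbb{F}_{q_1}}(\lambda)\in\mathbb{F}_{q_1}^\times$. In particular there exists $\lambda_1\in\mathbb{F}_{q_0}$ such that $\mathrm{Tr}_{\mathbb{F}_q/\mathbb{F}_{q_1}}(\lambda_1)=1$.
   Context: For $q=q_1^k$, $\mathrm{Tr}_{\mathbb{F}_q/\mathbb{F}_{q_1}}(x)=x+x^{q_1}+\dots+x^{q_1^{k-1}}$. *)

(* Defs.v *)
From mathcomp Require Import all_boot all_algebra all_field.
Set Implicit Arguments. Unset Strict Implicit. Unset Printing Implicit Defensive.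
Import GRing.Theory.
Local Open Scope ring_scope.

Definition in_subfield (F : finFieldType) (q' : nat) (x : F) : bool :=
  x ^+ q' == x.

(* Tr_{F_q/F_{q1}}(x) = x + x^{q1} + ... + x^{q1^(k-1)}  where q = q1^k. *)
Definition trace (F : finFieldType) (q1 k : nat) (x : F) : F :=
  \sum_(i < k) x ^+ (q1 ^ i).

(* Main.v *)
Require Import Defs.
From mathcomp Require Import all_boot all_algebra all_field zify.
Set Implicit Arguments. Unset Strict Implicit. Unset Printing Implicit Defensive.
Import GRing.Theory.
Local Open Scope ring_scope.

Section Aux.
Variable F : finFieldType.
Hypothesis ch : (3 \in [pchar F])%N.

Lemma frobD (e : nat) (x y : F) : (x + y) ^+ (3 ^ e) = x ^+ (3 ^ e) + y ^+ (3 ^ e).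
Proof.
apply: exprDn_pchar; rewrite pnatX pnatE //; by rewrite ch.
Qed.

Lemma frob_sum (e : nat) (I : Type) (s : seq I) (P : pred I) (f : I -> F) :
  (\sum_(i <- s | P i) f i) ^+ (3 ^ e) = \sum_(i <- s | P i) f i ^+ (3 ^ e).
Proof.
apply: (big_morph (fun x : F => x ^+ (3 ^ e))); first exact: frobD.
by rewrite expr0n expn_eq0.
Qed.

Lemma fix_pow (q a : nat) (x : F) : x ^+ q = x -> x ^+ (q ^ a) = x.
Proof.
move=> h; elim: a => [|a IH]; first by rewrite expn0 expr1.
by rewrite expnSr exprM IH h.
Qed.

Lemma fix_red (M a b : nat) (x : F) : x ^+ (3 ^ M) = x ->
  x ^+ (3 ^ (a * M + b)) = x ^+ (3 ^ b).
Proof.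
by move=> h; rewrite expnD exprM (mulnC a M) expnM (fix_pow a h).
Qed.

Lemma tr_fix (N a b : nat) (x : F) : #|F| = (3 ^ N)%N -> (a * b)%N = N ->
  (\sum_(s < b) x ^+ (3 ^ (a * s))) ^+ (3 ^ a) = \sum_(s < b) x ^+ (3 ^ (a * s)).
Proof.
move=> hF hab; rewrite frob_sum.
case: b hab => [|b] hab; first by rewrite !big_ord0.
rewrite big_ord_recr big_ord_recl /=.
have -> : x ^+ (3 ^ (a * b)) ^+ (3 ^ a) = x ^+ (3 ^ (a * 0)).
  by rewrite -exprM -expnD -mulnSr hab -hF expf_card muln0 expn0 expr1.
rewrite addrC; congr (_ + _); apply: eq_bigr => i _.
by rewrite -exprM -expnD -mulnSr.
Qed.

Lemma regroup (m j d c : nat) (x : F) : x ^+ (3 ^ m) = x -> (m %| j * d)%N ->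
  \sum_(i < c * d) x ^+ (3 ^ (j * i)) = (\sum_(0 <= u < d) x ^+ (3 ^ (j * u))) *+ c.
Proof.
move=> hx /dvdnP [t ht].
rewrite -(big_mkord xpredT (fun i => x ^+ (3 ^ (j * i)))).
elim: c => [|c IH]; first by rewrite mul0n big_geq.
rewrite mulSn addnC (@big_cat_nat _ _ _ (c * d)%N) //=; last exact: leq_addr.
rewrite IH mulrSr; congr (_ + _).
rewrite -{1}(add0n (c * d)%N) big_addn addKn; apply: eq_bigr => i _.
have -> : (j * (i + c * d) = (c * t) * m + j * i)%N.
  by rewrite mulnDr addnC mulnCA ht mulnA.
exact: fix_red.
Qed.


Lemma sum_only0 (n : nat) (f : nat -> F) : (0 < n)%N ->
  (forall i, (0 < i)%N -> (i < n)%N -> f i = 0) -> \sum_(0 <= i < n) f i = f 0%N.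
Proof.
move=> n0 h; rewrite (big_ltn n0) big_nat_cond big1 ?addr0 // => i /andP [/andP [i1 i2] _].
exact: h.
Qed.

Lemma core (N m j r k c d : nat) : #|F| = (3 ^ N)%N -> (0 < N)%N -> (m * r)%N = N ->
  k = (c * d)%N -> ~~ (3 %| c)%N -> (m %| j * d)%N -> (0 < d)%N ->
  (forall u, u < d -> m %| j * u -> u = 0)%N ->
  exists x : F, x ^+ (3 ^ m) = x /\ \sum_(i < k) x ^+ (3 ^ (j * i)) != 0.
Proof.
move=> hF N0 hN hk c3 hmd d0 hu.
have /andP [m0 r0] : ((0 < m) && (0 < r))%N by rewrite -muln_gt0 hN.
have key : forall u s : nat, (u < d)%N -> (s < r)%N ->
    ((j * u + m * s) %% N == 0)%N = ((u == 0) && (s == 0))%N.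
  move=> u s ud sr; apply/idP/idP; last first.
    by case/andP => /eqP -> /eqP ->; rewrite !muln0 mod0n.
  move=> h; have {}h : (N %| j * u + m * s)%N by [].
  have hmN : (m %| N)%N by rewrite -hN dvdn_mulr.
  have h1 : (m %| j * u)%N.
    by move: (dvdn_trans hmN h); rewrite dvdn_addl // dvdn_mulr.
  have u0 := hu u ud h1; rewrite u0 eqxx /=.
  move: h; rewrite u0 muln0 add0n -hN dvdn_pmul2l // => rs.
  case: s sr rs => // s sr rs; have := dvdn_leq (ltn0Sn s) rs.
  by rewrite leqNgt sr.
have e1 : forall e, (1 == 3 ^ e)%N = (e == 0)%N.
  by move=> e; rewrite eq_sym -[X in _ == X](expn0 3) eqn_exp2l.
set R : {poly F} := \sum_(0 <= u < d) \sum_(0 <= s < r) 'X^(3 ^ ((j * u + m * s) %% N)).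
have R1 : R`_1 = 1.
  rewrite /R coef_sum sum_only0 //; last first.
    move=> u u1 ud; rewrite coef_sum big1_seq // => s /andP [_]; rewrite mem_index_iota => /andP [_ sr].
    by rewrite coefXn e1 key //; case: u u1 {ud}.
  rewrite coef_sum sum_only0 //; last first.
    by move=> s s1 sr; rewrite coefXn e1 key //; case: s s1 {sr}.
  by rewrite coefXn e1 key.
have Rn0 : R != 0.
  by apply/eqP => h; move: R1; rewrite h coef0 => /eqP; rewrite eq_sym oner_eq0.
have Rs : (size R <= #|F|)%N.
  apply/leq_sizeP => i hi; rewrite coef_sum big1 // => u _.
  rewrite coef_sum big1 // => s _; rewrite coefXn gtn_eqF //.
  apply: leq_trans hi; rewrite hF ltn_exp2l //; exact: ltn_pmod.
have hyF : forall y : F, y ^+ (3 ^ N) = y by move=> y; rewrite -hF expf_card.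
case: (pickP (fun y : F => R.[y] != 0)) => [y hy | h]; last first.
  have hall : all (root R) (enum F).
    by apply/allP => x _; rewrite /root; have := h x => /negbFE.
  by have := max_poly_roots Rn0 hall (enum_uniq F); rewrite -cardE ltnNge Rs.
exists (\sum_(s < r) y ^+ (3 ^ (m * s))).
have fx := tr_fix y hF hN.
split => //.
rewrite hk (@regroup m j d c _ fx hmd) -mulr_natr mulf_eq0 negb_or; apply/andP; split; last first.
  by rewrite -(dvdn_pcharf ch).
suff -> : \sum_(0 <= u < d) (\sum_(s < r) y ^+ (3 ^ (m * s))) ^+ (3 ^ (j * u)) = R.[y] by [].
rewrite /R horner_sum; apply: eq_bigr => u _; rewrite frob_sum horner_sum big_mkord.
apply: eq_bigr => s _; rewrite hornerXn -exprM -expnD addnC.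
by rewrite {1}(divn_eq (j * u + m * s) N) fix_red.
Qed.

End Aux.

Theorem lemma4p3 (F : finFieldType) (n q0 r q1 k : nat) :
  #|F| = (3 ^ (2 * n + 1))%N ->
  (3 ^ (2 * n + 1) = q0 ^ r)%N ->
  prime r -> odd r -> r != 3%N ->
  (3 ^ (2 * n + 1) = q1 ^ k)%N ->
  (exists lambda : F, in_subfield q0 lambda /\
     in_subfield q1 (trace q1 k lambda) /\ trace q1 k lambda != 0) /\
  (exists lambda1 : F, in_subfield q0 lambda1 /\ trace q1 k lambda1 = 1).
Proof.
move=> hF hq0 pr_r _ r3 hq1.
move: hF hq0 hq1; have : (0 < 2 * n + 1)%N by rewrite addn1.
move: (2 * n + 1)%N => N N0 hF hq0 hq1.
have ch : (3 \in [pchar F])%N by apply: (card_finPcharP hF).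
have r0 : (0 < r)%N := prime_gt0 pr_r.
have : (q0 %| 3 ^ N)%N by rewrite hq0 dvdn_exp.
case/dvdn_pfactor => // m _ e0; subst q0.
move: hq0; rewrite -expnM => /eqP; rewrite eqn_exp2l // => /eqP hN.
have k0 : (0 < k)%N.
  case: k hq1 => // h; have := ltn_exp2l 0 N (isT : (1 < 3)%N).
  by rewrite N0 h !expn0 ltnn.
have : (q1 %| 3 ^ N)%N by rewrite hq1 dvdn_exp.
case/dvdn_pfactor => // j _ e1; subst q1.
move: hq1; rewrite -expnM => /eqP; rewrite eqn_exp2l // => /eqP hNj.
have /andP [m0 _] : ((0 < m) && (0 < r))%N by rewrite -muln_gt0 -hN.
have /andP [j0 _] : ((0 < j) && (0 < k))%N by rewrite -muln_gt0 -hNj.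
have [x [hx htr]] : exists x : F, x ^+ (3 ^ m) = x /\ \sum_(i < k) x ^+ (3 ^ (j * i)) != 0.
  case: (boolP (j %| m)%N) => hjm.
    have hm := esym (divnK hjm); set d := (m %/ j)%N in hm.
    have d0 : (0 < d)%N by move: m0; rewrite hm muln_gt0 => /andP [].
    have hkd : k = (r * d)%N.
      apply/eqP; rewrite -(eqn_pmul2l j0); apply/eqP.
      by rewrite -hNj hN hm; lia.
    apply: (@core F ch N m j r k r d hF N0 (esym hN)) => //.
    - by rewrite dvdn_prime2 // eq_sym.
    - by rewrite hm mulnC.
    - move=> u ud; rewrite hm mulnC dvdn_pmul2l //.
      case: u ud => // u ud /(dvdn_leq (ltn0Sn u)); by rewrite leqNgt ud.
  apply: (@core F ch N m j r k 1 k hF N0 (esym hN)) => //.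
  - by rewrite mul1n.
  - by rewrite -hNj hN dvdn_mulr.
  move=> u uk /dvdnP [t ht].
  have hku : (k %| u * r)%N.
    apply/dvdnP; exists t; apply/eqP; rewrite -(eqn_pmul2l j0); apply/eqP.
    by rewrite mulnA ht -mulnA -hN hNj mulnCA.
  case: (boolP (r %| k)%N) => hrk.
    case/dvdnP: hrk => k' hk'; case/negP: hjm; apply/dvdnP; exists k'.
    apply/eqP; rewrite -(eqn_pmul2r r0); apply/eqP.
    by rewrite -hN hNj hk'; lia.
  have cop : coprime k r by rewrite coprime_sym prime_coprime.
  move: hku; rewrite Gauss_dvdl //.
  clear ht; case: u uk => // u uk /(dvdn_leq (ltn0Sn u)); by rewrite leqNgt uk.
have trE : forall y : F, trace (3 ^ j) k y = \sum_(i < k) y ^+ (3 ^ (j * i)).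
  by move=> y; apply: eq_bigr => i _; rewrite expnM.
set t := \sum_(i < k) x ^+ (3 ^ (j * i)) in htr.
have htq : t ^+ (3 ^ j) = t := tr_fix ch x hF (esym hNj).
have htm : t ^+ (3 ^ m) = t.
  rewrite /t (frob_sum ch); apply: eq_bigr => i _; by rewrite exprAC hx.
split.
  exists x; rewrite /in_subfield trE -/t hx htq; split => //; split => //.
exists (t^-1 * x); rewrite /in_subfield exprMn exprVn htm hx; split => //.
rewrite trE; under eq_bigr => i _ do rewrite exprMn exprVn expnM (fix_pow i htq).
rewrite -mulr_sumr; under eq_bigr do rewrite -expnM.
by rewrite -/t mulVf.
Qed.
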